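(* If $S$ is a numerical semigroup whose set of Betti elements $\mathrm{Betti}(S)$ is totally ordered by $\le_S$ (i.e. $S$ is Betti-sorted), then $S$ is a complete intersection.
   Context: A numerical semigroup is a submonoid of $(\mathbb N,+)$ with finite complement, minimally generated by $\{n_1,\dots,n_e\}$. Write $a\le_S b$ if $b-a\in S$. Let $\varphi:\mathbb N^e\to S$, $\varphi(a)=\sum_ia_in_i$, $\mathrm Z(s)=\varphi^{-1}(s)$. $\nabla_s$ is the graph on $\mathrm Z(s)$ with distinct $x,y$ adjacent iff $x\cdot y\neq0$; $\mathrm{nc}(\nabla_s)$ is its number of connected components; $s$ is a Betti element if $\nabla_s$ is disconnected. A minimal presentation of $S$ is a minimal (by inclusion) system of generators of the congruence $\ker\varphi=\{(a,b):\varphi(a)=\varphi(b)\}$; all minimal presentations have cardinality $\sum_{b\in\mathrm{Betti}(S)}(\mathrm{nc}(\nabla_b)-1)\ge e-1$. $S$ is a complete intersection if this cardinality equals $e-1$. *)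

(* Defs.v *)
From mathcomp Require Import all_boot.
Set Implicit Arguments. Unset Strict Implicit. Unset Printing Implicit Defensive.

Definition numerical_semigroup (S : nat -> Prop) : Prop :=
  [/\ S 0, (forall a b, S a -> S b -> S (a + b)) & exists N, forall m, N <= m -> S m].

Definition minimal_generator (S : nat -> Prop) (x : nat) : Prop :=
  [/\ S x, 0 < x & ~ (exists a b, [/\ S a, S b, 0 < a, 0 < b & x = a + b])].

Definition minimal_generating_system (S : nat -> Prop) (e : nat) (n : 'I_e -> nat) : Prop :=
  injective n /\ (forall x, minimal_generator S x <-> exists i, n i = x).

Definition leS (S : nat -> Prop) (a b : nat) : Prop := a <= b /\ S (b - a).

Definition phi (e : nat) (n : 'I_e -> nat) (a : {ffun 'I_e -> nat}) : nat :=
  \sum_(i < e) a i * n i.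

(** Z(s): factorizations of s. Since every n_i >= 1, all coordinates are <= s,
    so we may take them in the finite type {ffun 'I_e -> 'I_s.+1}. *)
Definition Zf (e : nat) (n : 'I_e -> nat) (s : nat) : {set {ffun 'I_e -> 'I_s.+1}} :=
  [set x : {ffun 'I_e -> 'I_s.+1} | \sum_(i < e) (x i : nat) * n i == s].
Arguments Zf {e} n s.

Definition nabla_edge (e : nat) (n : 'I_e -> nat) (s : nat) :
    rel {ffun 'I_e -> 'I_s.+1} :=
  fun x y => [&& x \in Zf n s, y \in Zf n s, x != y &
                 [exists i, (0 < (x i : nat)) && (0 < (y i : nat))]].
Arguments nabla_edge {e} n s.

Definition nc (e : nat) (n : 'I_e -> nat) (s : nat) : nat :=
  n_comp (nabla_edge n s) (mem (Zf n s)).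

Definition betti (S : nat -> Prop) (e : nat) (n : 'I_e -> nat) (s : nat) : Prop :=
  S s /\ 1 < nc n s.

Definition betti_sorted (S : nat -> Prop) (e : nat) (n : 'I_e -> nat) : Prop :=
  forall b b', betti S n b -> betti S n b' -> leS S b b' \/ leS S b' b.

Definition vadd (e : nat) (a c : {ffun 'I_e -> nat}) : {ffun 'I_e -> nat} :=
  [ffun i => a i + c i].

Inductive cong_gen (e : nat) (rho : {ffun 'I_e -> nat} * {ffun 'I_e -> nat} -> Prop) :
    {ffun 'I_e -> nat} -> {ffun 'I_e -> nat} -> Prop :=
  | cg_base a b : rho (a, b) -> cong_gen rho a b
  | cg_refl a : cong_gen rho a a
  | cg_sym a b : cong_gen rho a b -> cong_gen rho b a
  | cg_trans a b c : cong_gen rho a b -> cong_gen rho b c -> cong_gen rho a c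
  | cg_add a b c : cong_gen rho a b -> cong_gen rho (vadd a c) (vadd b c).

Definition presentation (e : nat) (n : 'I_e -> nat)
    (rho : {ffun 'I_e -> nat} * {ffun 'I_e -> nat} -> Prop) : Prop :=
  forall a b, cong_gen rho a b <-> phi n a = phi n b.

Definition minimal_presentation (e : nat) (n : 'I_e -> nat)
    (rho : {ffun 'I_e -> nat} * {ffun 'I_e -> nat} -> Prop) : Prop :=
  presentation n rho /\
  forall sigma, (forall p, sigma p -> rho p) -> presentation n sigma ->
    forall p, rho p -> sigma p.

(** S is a complete intersection: a (hence every) minimal presentation has
    cardinality e - 1. *)
Definition complete_intersection (e : nat) (n : 'I_e -> nat) : Prop :=
  exists rho : seq ({ffun 'I_e -> nat} * {ffun 'I_e -> nat}),
    [/\ uniq rho, minimal_presentation n (fun p => p \in rho) & size rho = e - 1].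

(* Main.v *)
Require Import Defs.
From mathcomp Require Import all_boot all_algebra.
Set Implicit Arguments. Unset Strict Implicit. Unset Printing Implicit Defensive.
From Stdlib Require Import Classical ClassicalDescription.
Import GRing.Theory Num.Theory.

Section Rank.
Variable e' : nat.
Local Notation e := e'.+1.
Variable n : 'I_e -> nat.
Hypothesis npos0 : (0 < n ord0)%N.
Variable rho : seq ({ffun 'I_e -> nat} * {ffun 'I_e -> nat}).
Hypothesis Hpres : forall a b, phi n a = phi n b -> cong_gen (fun p => p \in rho) a b.

Local Open Scope ring_scope.

Definition a00 : {ffun 'I_e -> nat} := [ffun _ => 0%N].
Definition rowv (a : {ffun 'I_e -> nat}) : 'rV[rat]_e := \row_j (a j)%:R.
Definition Dm : 'M[rat]_(size rho, e) :=
  \matrix_(k, j) (((nth (a00, a00) rho k).1 j)%:R - ((nth (a00,a00) rho k).2 j)%:R).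

Lemma rowv_add a c : rowv (vadd a c) = rowv a + rowv c.
Proof. by apply/rowP => j; rewrite !mxE ffunE natrD. Qed.

Lemma cong_row a b : cong_gen (fun p => p \in rho) a b -> (rowv a - rowv b <= Dm)%MS.
Proof.
elim=> {a b} [a b h|a|a b _ IH|a b c _ IH1 _ IH2|a b c _ IH].
- have hk : (index (a, b) rho < size rho)%N by rewrite index_mem.
  have -> : rowv a - rowv b = row (Ordinal hk) Dm.
    by apply/rowP => j; rewrite !mxE /= nth_index.
  exact: row_sub.
- by rewrite subrr sub0mx.
- by rewrite -opprB eqmx_opp.
- have -> : rowv a - rowv c = (rowv a - rowv b) + (rowv b - rowv c) by rewrite addrA subrK.
  exact: addmx_sub.
- by rewrite !rowv_add opprD addrACA subrr addr0.
Qed.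

Definition sv (k : nat) (i : 'I_e) : {ffun 'I_e -> nat} := [ffun j => if j == i then k else 0%N].

Lemma phi_sv k i : phi n (sv k i) = (k * n i)%N.
Proof.
rewrite /phi (bigD1 i) //= big1 ?addn0; first by rewrite ffunE eqxx.
by move=> j /negbTE ji; rewrite ffunE ji mul0n.
Qed.

Definition Wm : 'M[rat]_(e', e) :=
  \matrix_(i, j) ((j == lift ord0 i)%:R * (n ord0)%:R - (j == ord0)%:R * (n (lift ord0 i))%:R).

Lemma row_Wm i : row i Wm = rowv (sv (n ord0) (lift ord0 i)) - rowv (sv (n (lift ord0 i)) ord0).
Proof.
apply/rowP => j; rewrite !mxE !ffunE.
by case: (j == lift ord0 i); case: (j == ord0); rewrite ?mul1r ?mul0r.
Qed.

Lemma Wm_sub : (Wm <= Dm)%MS.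
Proof.
apply/row_subP => i; rewrite row_Wm; apply: cong_row; apply: Hpres.
by rewrite !phi_sv mulnC.
Qed.

Lemma Wm_free : row_free Wm.
Proof.
apply/row_freeP.
exists (\matrix_(j, i) ((j == lift ord0 i)%:R / (n ord0)%:R)).
apply/matrixP => i i'; rewrite !mxE (bigD1 (lift ord0 i')) //= big1 => [|j hj]; last first.
  by rewrite !mxE (negbTE hj) mul0r mulr0.
have hl : (lift ord0 i' == ord0 :> 'I_e) = false by rewrite eq_sym; apply/negbTE/neq_lift.
rewrite !mxE addr0 (inj_eq lift_inj) eqxx hl mul0r subr0 mul1r.
have n0 : (n ord0)%:R != 0 :> rat by rewrite pnatr_eq0 -lt0n.
by rewrite mulfK // eq_sym.
Qed.

Lemma rank_bound : (e' <= size rho)%N.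
Proof.
have := Wm_free; rewrite /row_free => /eqP h.
apply: leq_trans (rank_leq_row Dm); rewrite -[X in (X <= _)%N]h; exact: mxrankS Wm_sub.
Qed.

End Rank.


Section Basic.
Variable e' : nat.
Local Notation e := e'.+1.
Variable n : 'I_e -> nat.
Variable S : nat -> Prop.
Hypothesis S0 : S 0.
Hypothesis Sadd : forall a b, S a -> S b -> S (a + b).
Hypothesis Hgen : forall i, minimal_generator S (n i).
Hypothesis Hall : forall x, minimal_generator S x -> exists i, n i = x.
Hypothesis Hsort : betti_sorted S n.

Lemma npos : forall i, 0 < n i.
Proof. by move=> i; case: (Hgen i). Qed.
Lemma nS : forall i, S (n i).
Proof. by move=> i; case: (Hgen i). Qed.

Local Notation vec := {ffun 'I_e -> nat}.
Implicit Types (a c : vec) (i : 'I_e) (s : nat).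


Definition delta (i : 'I_e) : vec := [ffun j => (j == i) : nat].
Definition vz : vec := [ffun => 0].
Definition cv (s : nat) (a : vec) : {ffun 'I_e -> 'I_s.+1} := [ffun i => inord (a i)].
Definition nv (s : nat) (x : {ffun 'I_e -> 'I_s.+1}) : vec := [ffun i => nat_of_ord (x i)].

Lemma phi_add a c : phi n (vadd a c) = phi n a + phi n c.
Proof. by rewrite /phi -big_split /=; apply: eq_bigr => i _; rewrite ffunE mulnDl. Qed.

Lemma phi_delta i : phi n (delta i) = n i.
Proof.
rewrite /phi (bigD1 i) //= big1 ?addn0; first by rewrite ffunE eqxx mul1n.
by move=> j /negbTE ji; rewrite ffunE ji mul0n.
Qed.

Lemma phi_vz : phi n vz = 0.
Proof. by rewrite /phi big1 // => i _; rewrite ffunE. Qed.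

Lemma phi_ge a i : a i <= phi n a.
Proof.
rewrite /phi (bigD1 i) //=; apply: leq_trans (leq_addr _ _).
by rewrite -{1}[a i]muln1 leq_mul2l npos orbT.
Qed.

Lemma nvK s a : phi n a = s -> nv (cv s a) = a.
Proof.
move=> ha; apply/ffunP => i; rewrite !ffunE inordK // ltnS -ha; exact: phi_ge.
Qed.

Lemma cvK s x : cv s (nv x) = x.
Proof. by apply/ffunP => i; rewrite !ffunE inord_val. Qed.

Lemma inZf s x : (x \in Zf n s) = (phi n (nv x) == s).
Proof.
rewrite /Zf inE /phi; congr (_ == _); apply: eq_bigr => i _; by rewrite ffunE.
Qed.

Lemma cv_in s a : phi n a = s -> cv s a \in Zf n s.
Proof. by move=> ha; rewrite inZf nvK // ha. Qed.

Lemma nv_inj (s : nat) : injective (fun x : {ffun 'I_e -> 'I_s.+1} => nv x).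
Proof. by move=> x y /(congr1 (cv s)); rewrite !cvK. Qed.

Lemma nvE s (x : {ffun 'I_e -> 'I_s.+1}) i : nv x i = x i :> nat.
Proof. by rewrite ffunE. Qed.

Lemma vaddE a c i : vadd a c i = a i + c i.
Proof. by rewrite ffunE. Qed.

Lemma vaddC a c : vadd a c = vadd c a.
Proof. by apply/ffunP => i; rewrite !ffunE addnC. Qed.

Lemma vaddA a b c : vadd a (vadd b c) = vadd (vadd a b) c.
Proof. by apply/ffunP => i; rewrite !ffunE addnA. Qed.

Lemma vadd0 a : vadd a vz = a.
Proof. by apply/ffunP => i; rewrite !ffunE addn0. Qed.

Lemma phi_pos a : 0 < phi n a -> exists i, 0 < a i.
Proof.
move=> h; case: (pickP (fun i => 0 < a i)) => [i hi|H]; first by exists i.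
move: h; rewrite /phi big1 // => i _; have := H i; rewrite lt0n => /negbFE/eqP ->.
by rewrite mul0n.
Qed.

Lemma phi0 a : phi n a = 0 -> a = vz.
Proof.
move=> h; apply/ffunP => i; rewrite ffunE; apply/eqP; rewrite -leqn0 -h; exact: phi_ge.
Qed.

Local Notation E s := (nabla_edge n s).

Lemma Esym s : symmetric (E s).
Proof.
move=> x y; rewrite /nabla_edge; rewrite andbCA eq_sym; congr [&& _, _, _ & _].
by apply/existsP/existsP => -[i /andP[h1 h2]]; exists i; rewrite h1 h2.
Qed.

Lemma Econ s : connect_sym (E s).
Proof. exact/sym_connect_sym/Esym. Qed.
Arguments Econ : clear implicits.

Lemma adj s x y i : x \in Zf n s -> y \in Zf n s -> 0 < x i -> 0 < y i ->
  connect (E s) x y.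
Proof.
move=> hx hy xi yi; have [->|nxy] := eqVneq x y; first exact: connect0.
apply: connect1; rewrite /nabla_edge hx hy nxy /=; apply/existsP; exists i.
by rewrite xi yi.
Qed.

Lemma connect_in s x y : connect (E s) x y -> x \in Zf n s -> y \in Zf n s.
Proof.
move=> /connectP[p]; elim: p x => [|z p IH] x /=; first by move=> _ ->.
by move=> /andP[/and4P[_ hz _ _] hp] hy _; apply: IH hp hy hz.
Qed.

Lemma root_in s x : x \in Zf n s -> fingraph.root (E s) x \in Zf n s.
Proof. by apply: connect_in; apply: connect_root. Qed.


Lemma phi_in a : S (phi n a).
Proof.
rewrite /phi; apply: (big_ind S) => // i _; elim: (a i) => [|k IH]; first by rewrite mul0n.
by rewrite mulSn; apply: Sadd => //; apply: nS.
Qed.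

Lemma fact_ex s : S s -> exists a, phi n a = s.
Proof.
elim: s {-2}s (leqnn s) => [|m IH] s hs Ss.
  by exists vz; rewrite phi_vz; move: hs; rewrite leqn0 => /eqP.
case: (ltnP 0 s) => [s0|]; last by rewrite leqn0 => /eqP->; exists vz; rewrite phi_vz.
case: (classic (exists u v, [/\ S u, S v, 0 < u, 0 < v & s = u + v])) => [[u [v [Sa Sb a0 b0 hs']]]|H].
  subst s.
  have [ya hya] : exists y, phi n y = u.
    by apply: IH => //; rewrite -ltnS; apply: leq_trans hs; rewrite -{1}[u]addn0 ltn_add2l.
  have [yb hyb] : exists y, phi n y = v.
    by apply: IH => //; rewrite -ltnS; apply: leq_trans hs; rewrite -{1}[v]add0n ltn_add2r.
  by exists (vadd ya yb); rewrite phi_add hya hyb.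
have [i hi] : exists i, n i = s by apply: Hall; split.
by exists (delta i); rewrite phi_delta.
Qed.


Definition rts s : {set {ffun 'I_e -> 'I_s.+1}} :=
  [set r | (r \in fingraph.roots (E s)) && (r \in Zf n s)].

Lemma card_rts s : #|rts s| = nc n s.
Proof. by rewrite /nc /n_comp_mem; apply: eq_card => r; rewrite !inE. Qed.

Lemma nc0 : nc n 0 <= 1.
Proof.
rewrite -card_rts; apply: (@leq_trans #|[set cv 0 vz]|); last by rewrite cards1.
apply: subset_leq_card; apply/subsetP => x.
rewrite inE => /andP[_]; rewrite inZf => /eqP hx; rewrite inE; apply/eqP; apply: (@nv_inj 0).
by rewrite (phi0 hx) nvK // phi_vz.
Qed.

Lemma betti_pos b : betti S n b -> 0 < b.
Proof.
case: b => [[_ h]|//]; by have := leq_trans h nc0.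
Qed.

Definition Lp b (x : {ffun 'I_e -> 'I_b.+1}) : Prop :=
  exists b', [/\ betti S n b', leS S b' b, b' <> b &
     exists y c, phi n y = b' /\ nv x = vadd y c].
Arguments Lp : clear implicits.

Lemma coordE s (x : {ffun 'I_e -> 'I_s.+1}) y c i : nv x = vadd y c -> (x i : nat) = y i + c i.
Proof. by move=> h; rewrite -nvE h vaddE. Qed.

Lemma KLaux b b1 b2 y1 c1 y2 c2 (x1 x2 : {ffun 'I_e -> 'I_b.+1}) :
  betti S n b1 -> leS S b1 b2 -> b2 <= b -> b2 <> b ->
  phi n y1 = b1 -> phi n y2 = b2 -> nv x1 = vadd y1 c1 -> nv x2 = vadd y2 c2 ->
  x1 \in Zf n b -> x2 \in Zf n b -> connect (E b) x1 x2.
Proof.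
move=> hb1 [le12 S12] le2 ne2 hy1 hy2 hx1 hx2 z1 z2.
have [w hw] := fact_ex S12.
have hc2 : phi n c2 = b - b2.
  by move: z2; rewrite inZf hx2 phi_add hy2 => /eqP <-; rewrite addKn.
set a3 := vadd (vadd y1 w) c2.
have h3 : phi n a3 = b by rewrite !phi_add hy1 hw hc2 subnKC // subnKC.
have z3 := cv_in h3.
have y1p : 0 < phi n y1 by rewrite hy1; exact: betti_pos.
have [i hi] := phi_pos y1p.
have c2p : 0 < phi n c2.
  by rewrite hc2 subn_gt0 ltn_neqAle le2 andbT; apply/eqP => h; apply: ne2.
have [j hj] := phi_pos c2p.
apply: (@connect_trans _ _ (cv b a3)).
  apply: (adj (i:=i)) => //; first by rewrite (coordE i hx1); apply: leq_trans hi (leq_addr _ _).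
  rewrite (coordE i (nvK h3 : nv (cv b a3) = vadd (vadd y1 w) c2)) vaddE.
  by apply: leq_trans hi (leq_trans (leq_addr _ _) (leq_addr _ _)).
apply: (adj (i:=j)) => //; last by rewrite (coordE j hx2); apply: leq_trans hj (leq_addl _ _).
rewrite (coordE j (nvK h3 : nv (cv b a3) = vadd (vadd y1 w) c2)).
by apply: leq_trans hj (leq_addl _ _).
Qed.

Lemma KL b (x1 x2 : {ffun 'I_e -> 'I_b.+1}) :
  x1 \in Zf n b -> x2 \in Zf n b -> Lp b x1 -> Lp b x2 -> connect (E b) x1 x2.
Proof.
move=> z1 z2 [b1 [hb1 l1 n1 [y1 [c1 [hy1 hx1]]]]] [b2 [hb2 l2 n2 [y2 [c2 [hy2 hx2]]]]].
case: (Hsort hb1 hb2) => h.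
  by apply: (KLaux hb1 h (proj1 l2) n2 hy1 hy2 hx1 hx2).
by rewrite Econ; apply: (KLaux hb2 h (proj1 l1) n1 hy2 hy1 hx2 hx1).
Qed.

Definition mainP b (r : {ffun 'I_e -> 'I_b.+1}) : Prop :=
  exists x, [/\ x \in Zf n b, Lp b x & fingraph.root (E b) x = r].
Arguments mainP : clear implicits.

Lemma main_uniq b r1 r2 : mainP b r1 -> mainP b r2 -> r1 = r2.
Proof.
move=> [x1 [z1 l1 <-]] [x2 [z2 l2 <-]].
apply/(fingraph.rootP (Econ b)); exact: KL.
Qed.

Definition pb (P : Prop) : bool := if excluded_middle_informative P then true else false.
Lemma pbP P : reflect P (pb P).
Proof. by rewrite /pb; case: excluded_middle_informative => h; constructor. Qed.

Definition nonmain b : {set {ffun 'I_e -> 'I_b.+1}} := [set r in rts b | ~~ pb (mainP b r)].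

Definition g b (r : {ffun 'I_e -> 'I_b.+1}) : 'I_e := odflt ord0 [pick i | 0 < r i].
Arguments g : clear implicits.

Lemma g_pos b r : r \in Zf n b -> 0 < b -> 0 < r (@g b r).
Proof.
move=> z b0; have rp : 0 < phi n (nv r) by move: z; rewrite inZf => /eqP ->.
have [i hi] := phi_pos rp.
rewrite /g; case: pickP => [j hj|H] //=; by have := H i; rewrite -nvE hi.
Qed.

Lemma rts_root b r : r \in rts b -> fingraph.root (E b) r = r /\ r \in Zf n b.
Proof. by rewrite inE => /andP[/eqP ? ?]. Qed.

Lemma rts_eq b r1 r2 : r1 \in rts b -> r2 \in rts b -> connect (E b) r1 r2 -> r1 = r2.
Proof.
move=> /rts_root[h1 _] /rts_root[h2 _] /(fingraph.rootP (Econ b)); by rewrite h1 h2.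
Qed.

Lemma g_inj b : 0 < b -> {in rts b &, injective (@g b)}.
Proof.
move=> b0 r1 r2 h1 h2 eg; apply: rts_eq => //.
have [_ z1] := rts_root h1; have [_ z2] := rts_root h2.
apply: (adj (i := g b r1)) => //; first exact: g_pos.
by rewrite eg; apply: g_pos.
Qed.

Definition Aset b : {set 'I_e} := (@g b) @: nonmain b.

Lemma card_Aset b : betti S n b ->
  nc n b <= #|Aset b| + 1 /\ ((forall r, ~ mainP b r) -> nc n b <= #|Aset b|).
Proof.
move=> hb; have b0 := betti_pos hb.
have cA : #|Aset b| = #|nonmain b|.
  rewrite /Aset; apply: card_in_imset => r1 r2; rewrite inE => /andP[h1 _]; rewrite inE => /andP[h2 _].
  exact: (g_inj b0).
have allnm : (forall r, ~ mainP b r) -> #|rts b| <= #|nonmain b|.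
  move=> H; apply: subset_leq_card; apply/subsetP => r hr; rewrite inE hr /=.
  by apply/negP => /pbP; apply: H.
rewrite cA -card_rts; split; last exact: allnm.
case: (classic (exists r, mainP b r)) => [[r hr]|H]; last first.
  apply: leq_trans (leq_addr _ _); apply: allnm => r hr; apply: H; by exists r.
rewrite (cardsD1 r) addnC; apply: leq_add; last exact: leq_b1.
apply: subset_leq_card; apply/subsetP => r'; rewrite in_setD1 => /andP[nr hr'].
rewrite inE hr' /=; apply/negP => /pbP hm; move/eqP: nr; apply; exact: main_uniq hm hr.
Qed.

Lemma Adisj_aux b1 b2 i : betti S n b1 -> betti S n b2 -> leS S b1 b2 -> b1 <> b2 ->
  i \in Aset b1 -> i \in Aset b2 -> False.
Proof.
move=> hb1 hb2 [le12 S12] ne /imsetP[r1 hr1 ->] /imsetP[r2 hr2 eg].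
move: hr1; rewrite inE => /andP[/rts_root[_ z1] _].
move: hr2; rewrite inE => /andP[/rts_root[rr2 z2] /pbP nm].
have p1 := g_pos z1 (betti_pos hb1).
have p2 := g_pos z2 (betti_pos hb2); rewrite -eg in p2.
have [z hz] := fact_ex S12.
have hph1 : phi n (nv r1) = b1 by move: z1; rewrite inZf => /eqP.
set a := vadd (nv r1) z.
have ha : phi n a = b2 by rewrite phi_add hph1 hz subnKC.
apply: nm; exists (cv b2 a); split; first exact: cv_in.
  exists b1; split => //; exists (nv r1), z; split => //; exact: nvK.
rewrite -rr2; apply/(fingraph.rootP (Econ b2)); apply: (adj (i := g b1 r1)) => //; first exact: cv_in.
rewrite (coordE (g b1 r1) (nvK ha : nv (cv b2 a) = vadd (nv r1) z)) nvE.
exact: leq_trans p1 (leq_addr _ _).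
Qed.

Lemma Adisj b1 b2 i : betti S n b1 -> betti S n b2 -> b1 <> b2 ->
  i \in Aset b1 -> i \in Aset b2 -> False.
Proof.
move=> h1 h2 ne; case: (Hsort h1 h2) => h a1 a2.
  exact: (Adisj_aux h1 h2 h ne a1 a2).
exact: (Adisj_aux h2 h1 h (fun x => ne (esym x)) a2 a1).
Qed.

Lemma mem_bigcup_seq (F : nat -> {set 'I_e}) l i :
  i \in \bigcup_(b <- l) F b -> exists2 b, b \in l & i \in F b.
Proof.
elim: l => [|b l IH]; first by rewrite big_nil inE.
rewrite big_cons inE => /orP[h|/IH[b' h1 h2]]; first by exists b; rewrite ?inE ?eqxx.
by exists b'; rewrite // inE h1 orbT.
Qed.

Lemma card_bigcup (l : seq nat) : uniq l -> (forall b, b \in l -> betti S n b) ->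
  #|\bigcup_(b <- l) Aset b| = \sum_(b <- l) #|Aset b|.
Proof.
elim: l => [|b l IH]; first by rewrite !big_nil cards0.
rewrite /= => /andP[nb ul] hl; rewrite !big_cons cardsU -IH //; last first.
  by move=> b' h; apply: hl; rewrite inE h orbT.
suff -> : Aset b :&: \bigcup_(j <- l) Aset j = set0 by rewrite cards0 subn0.
apply/setP => i; rewrite !inE; apply/negP => /andP[h1 /mem_bigcup_seq[b' hb' h2]].
apply: (Adisj (hl b _) (hl b' _) _ h1 h2); rewrite ?inE ?eqxx ?hb' ?orbT //.
by move=> eb; move: nb; rewrite eb hb'.
Qed.

Lemma sum_le (l : seq nat) : uniq l -> (forall b, b \in l -> betti S n b) ->
  \sum_(b <- l) #|Aset b| <= e.
Proof.
move=> ul hl; rewrite -card_bigcup //; apply: leq_trans (max_card _) _; by rewrite card_ord.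
Qed.

Lemma size_betti (l : seq nat) : uniq l -> (forall b, b \in l -> betti S n b) ->
  size l <= e.
Proof.
move=> ul hl; apply: leq_trans (sum_le ul hl); rewrite -sum1_size big_seq [X in _ <= X]big_seq.
apply: leq_sum => b hb; have [hc _] := card_Aset (hl b hb).
have [_ h] := hl b hb; rewrite -(leq_add2r 1) add1n; exact: leq_trans h hc.
Qed.

Lemma betti_list : exists l, uniq l /\ forall b, b \in l <-> betti S n b.
Proof.
apply: NNPP => H.
suff : forall k, exists l, [/\ uniq l, (forall b, b \in l -> betti S n b) & size l = k].
  move=> /(_ e.+1)[l [ul hl sl]]; have := size_betti ul hl; by rewrite sl ltnn.
elim=> [|k [l [ul hl sl]]]; first by exists [::].
have [b hb] : exists b, betti S n b /\ b \notin l.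
  apply: NNPP => H2; apply: H; exists l; split => // b; split; first exact: hl.
  move=> hb; apply/negPn/negP => nb; apply: H2; by exists b.
case: hb => hb nb; exists (b :: l); split; rewrite /= ?nb ?sl //.
by move=> b'; rewrite inE => /orP[/eqP->|/hl].
Qed.

Lemma min_ex (l : seq nat) x : x \in l -> exists2 m, m \in l & forall b, b \in l -> m <= b.
Proof.
elim: l x => [|y l IH] x //; rewrite inE => _.
case: l IH => [|z l] IH.
  by exists y; rewrite ?inE ?eqxx // => b; rewrite inE => /eqP->.
have [m hm hmin] := IH z (mem_head _ _).
case: (leqP y m) => hym.
  exists y; first exact: mem_head.
  move=> b; rewrite inE => /orP[/eqP->//|/hmin]; exact: leq_trans.
exists m; first by rewrite inE hm orbT.
move=> b; rewrite inE => /orP[/eqP->|/hmin//]; exact: ltnW.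
Qed.

Lemma sum_nc (l : seq nat) : uniq l -> (forall b, b \in l <-> betti S n b) ->
  \sum_(b <- l) (nc n b).-1 <= e'.
Proof.
move=> ul hl; have hl' : forall b, b \in l -> betti S n b by move=> b /hl.
case: l ul hl hl' => [|x l] ul hl hl'; first by rewrite big_nil.
have [bm hbm hmin] := min_ex (mem_head x l).
have hsum := sum_le ul hl'.
have nomain : forall r, ~ mainP bm r.
  move=> r [y [_ [b' [hb' [le' _] ne' _]] _]].
  apply: ne'; apply/eqP; rewrite eqn_leq le' /=; apply: hmin; exact/hl.
have [_ hA] := card_Aset (hl' _ hbm).
have E1 : \sum_(b <- x :: l) (nc n b).-1 =
   (nc n bm).-1 + \sum_(b <- x :: l | b != bm) (nc n b).-1 := bigD1_seq _ hbm ul.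
have E2 : \sum_(b <- x :: l) #|Aset b| =
   #|Aset bm| + \sum_(b <- x :: l | b != bm) #|Aset b| := bigD1_seq _ hbm ul.
rewrite E2 in hsum; rewrite E1.
rewrite -ltnS; apply: leq_trans _ hsum; rewrite -addSn; apply: leq_add.
  have [_ h] := hl' _ hbm; rewrite prednK; first exact: (hA nomain).
  exact (ltnW h).
rewrite big_seq_cond [X in _ <= X]big_seq_cond; apply: leq_sum => b /andP[hb _].
have [hc _] := card_Aset (hl' _ hb); rewrite -subn1 leq_subLR addnC; exact: hc.
Qed.

Definition Rl s := enum (rts s).
Definition prs s : seq (vec * vec) :=
  if Rl s is r0 :: rs then [seq (nv r0, nv r) | r <- rs] else [::].
Definition rhoL (bs : seq nat) := flatten [seq prs b | b <- bs].

Lemma size_prs s : size (prs s) = (nc n s).-1.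
Proof.
rewrite -card_rts cardE /prs -/(Rl s); case: (Rl s) => [|r0 rs] //=; by rewrite size_map.
Qed.

Lemma prs_memP s p : p \in prs s ->
  exists r0 rs r, [/\ Rl s = r0 :: rs, r \in rs & p = (nv r0, nv r)].
Proof.
rewrite /prs; case: (Rl s) => [|r0 rs] //= /mapP[r hr ->]; by exists r0, rs, r.
Qed.

Lemma Rl_rts s r : r \in Rl s -> r \in rts s.
Proof. by rewrite mem_enum. Qed.

Lemma prs_phi s p : p \in prs s -> phi n p.1 = s /\ phi n p.2 = s.
Proof.
move=> /prs_memP[r0 [rs [r [hR hr ->]]]] /=.
have h0 : r0 \in Rl s by rewrite hR mem_head.
have h1 : r \in Rl s by rewrite hR inE hr orbT.
have [_ z0] := rts_root (Rl_rts h0); have [_ z1] := rts_root (Rl_rts h1).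
by move: z0 z1; rewrite !inZf => /eqP -> /eqP ->.
Qed.

Lemma uniq_prs s : uniq (prs s).
Proof.
have := enum_uniq (rts s); rewrite /prs -/(Rl s); case: (Rl s) => [|r0 rs] //= /andP[_ u].
rewrite map_inj_uniq // => r r' [] /nv_inj; done.
Qed.

Lemma uniq_rhoL bs : uniq bs -> uniq (rhoL bs).
Proof.
elim: bs => [|b bs IH] //= /andP[nb ub]; rewrite cat_uniq uniq_prs IH // andbT.
apply/hasPn => p /flatten_mapP[b' hb' hp] ; apply/negP => hp'.
have [h1 _] := prs_phi hp; have [h2 _] := prs_phi hp'.
by move: nb; rewrite -h2 h1 hb'.
Qed.

Lemma size_rhoL bs : size (rhoL bs) = \sum_(b <- bs) (nc n b).-1.
Proof.
elim: bs => [|b bs IH]; first by rewrite big_nil.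
by rewrite /rhoL /= size_cat -/(rhoL bs) IH big_cons size_prs.
Qed.

Section Pres.
Variable bs : seq nat.
Hypothesis hbs : forall b, b \in bs <-> betti S n b.
Local Notation rho := (fun p => p \in rhoL bs).

Lemma cong_phi (sig : vec * vec -> Prop) : (forall p, sig p -> rho p) ->
  forall u v, cong_gen sig u v -> phi n u = phi n v.
Proof.
move=> hsig u v; elim=> {u v} [u v /hsig /flatten_mapP[b _ /prs_phi[-> ->]]|u|u v _ IH|u v w _ IH1 _ IH2|u v c _ IH] //.
- by rewrite IH1.
- by rewrite !phi_add IH.
Qed.

Lemma gen_step s : (forall s', s' < s -> forall a b, phi n a = s' -> phi n b = s' -> cong_gen rho a b) ->
  forall a b, phi n a = s -> phi n b = s -> cong_gen rho a b.
Proof.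
move=> IH.
have edge : forall x y, nabla_edge n s x y -> cong_gen rho (nv x) (nv y).
  move=> x y /and4P[zx zy _ /existsP[i /andP[xi yi]]].
  set x' : vec := [ffun j => nv x j - (j == i)].
  set y' : vec := [ffun j => nv y j - (j == i)].
  have ex : vadd x' (delta i) = nv x.
    apply/ffunP => j; rewrite !ffunE; case: eqP => [->|] /=; last by rewrite !subn0 addn0.
    by rewrite subnK.
  have ey : vadd y' (delta i) = nv y.
    apply/ffunP => j; rewrite !ffunE; case: eqP => [->|] /=; last by rewrite !subn0 addn0.
    by rewrite subnK.
  have px : phi n x' + n i = s by move: zx; rewrite inZf -ex phi_add phi_delta => /eqP.
  have py : phi n y' + n i = s by move: zy; rewrite inZf -ey phi_add phi_delta => /eqP.
  have lt : phi n x' < s by rewrite -px -{1}[phi n x']addn0 ltn_add2l npos.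
  rewrite -ex -ey; apply: cg_add; apply: (IH (phi n x')) => //.
  by apply/eqP; rewrite -(eqn_add2r (n i)) px py.
have con : forall x y, connect (nabla_edge n s) x y -> cong_gen rho (nv x) (nv y).
  move=> x y /connectP[p]; elim: p x => [|z p IHp] x /=; first by move=> _ ->; apply: cg_refl.
  move=> /andP[hxz hp] hy; apply: cg_trans (edge _ _ hxz) (IHp _ hp hy).
move=> a b ha hb.
have za := cv_in ha; have zb := cv_in hb.
rewrite -(nvK ha) -(nvK hb).
set x := cv s a; set y := cv s b.
have rx := con _ _ (connect_root (nabla_edge n s) x).
have ry := con _ _ (connect_root (nabla_edge n s) y).
have rxin : fingraph.root (nabla_edge n s) x \in rts s.
  by rewrite inE; apply/andP; split; [exact: (roots_root (Econ s)) | apply: root_in].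

have ryin : fingraph.root (nabla_edge n s) y \in rts s.
  by rewrite inE; apply/andP; split; [exact: (roots_root (Econ s)) | apply: root_in].

suff : cong_gen rho (nv (fingraph.root (nabla_edge n s) x)) (nv (fingraph.root (nabla_edge n s) y)).
  move=> h; apply: cg_trans rx (cg_trans h (cg_sym ry)).
case: (classic (betti S n s)) => hbet; last first.
  have hle : #|rts s| <= 1.
    rewrite card_rts leqNgt; apply/negP => h; apply: hbet; split => //.
    by rewrite -ha; apply: phi_in.
  move/card_le1P: hle => /(_ _ rxin (fingraph.root (nabla_edge n s) y)); rewrite ryin inE => /esym/eqP ->.
  exact: cg_refl.
have sb : s \in bs by apply/hbs.
have cr : forall r, r \in rts s -> exists r0 rs, Rl s = r0 :: rs /\ cong_gen rho (nv r0) (nv r).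
  move=> r hr; have : r \in Rl s by rewrite mem_enum.
  rewrite /prs; case hR: (Rl s) => [|r0 rs] //; rewrite inE => /orP[/eqP->|hrs].
    by exists r0, rs; split => //; apply: cg_refl.
  exists r0, rs; split => //; apply: cg_base; apply/flatten_mapP; exists s => //.
  by rewrite /prs hR; apply/mapP; exists r.
have [r0 [rs [h1 c1]]] := cr _ rxin; have [r0' [rs' [h2 c2]]] := cr _ ryin.
move: c2; rewrite h1 in h2; case: h2 => <- _ c2.
exact: cg_trans (cg_sym c1) c2.
Qed.

Lemma gen_all a b : phi n a = phi n b -> cong_gen rho a b.
Proof.
move=> hab; move: {2}(phi n a) (leqnn (phi n a)) => m.
elim: m a b hab => [|m IHm] a b hab hm.
  apply: (gen_step (s := phi n a)) => // s'; by rewrite ltnNge (leq_trans hm (leq0n _)).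
apply: (gen_step (s := phi n a)) => // s' hs' a' b' h1 h2.
by apply: IHm; rewrite ?h1 ?h2 // -ltnS (leq_trans hs' hm).
Qed.

Lemma pres : presentation n rho.
Proof. move=> a b; split; [exact: cong_phi | exact: gen_all]. Qed.

End Pres.

Lemma minimal bs (sig : vec * vec -> Prop) :
  (forall p, sig p -> p \in rhoL bs) -> presentation n sig ->
  forall p, p \in rhoL bs -> sig p.
Proof.
move=> hsig hpres p /flatten_mapP[b hb hp].
have [r0 [rs [rq [hR hrq ep]]]] := prs_memP hp.
have u0 : uniq (r0 :: rs) by rewrite -hR enum_uniq.
have r0in : r0 \in rts b by apply: Rl_rts; rewrite hR mem_head.
have rqin : rq \in rts b by apply: Rl_rts; rewrite hR inE hrq orbT.
have nc0q : ~~ connect (nabla_edge n b) r0 rq.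
  apply/negP => /(rts_eq r0in rqin) e0; move: u0; rewrite /= e0 hrq.
  done.
apply: NNPP => nsp.
pose J (u : vec) := connect (nabla_edge n b) (cv b u) rq.
have inv : forall u v, cong_gen sig u v -> phi n u = b -> J u = J v.
  move=> u v; elim=> {u v} [u v hs|u|u v hc IH|u v w huv IH1 hvw IH2|u v c huv IH] //.
  - move=> hu; have /flatten_mapP[b' hb' hp'] := hsig _ hs.
    have eb : b' = b by have [h1 _] := prs_phi hp'; rewrite -h1 -hu.
    subst b'.
    have [r0' [rs' [r' [hR' hr' ep']]]] := prs_memP hp'.
    rewrite hR in hR'; case: hR' => e1 e2; subst r0' rs'; case: ep' => eu ev; subst u v.
    have r'in : r' \in rts b by apply: Rl_rts; rewrite hR inE hr' orbT.
    rewrite /J !cvK (negbTE nc0q); apply/esym/negP => /(rts_eq r'in rqin) e3.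
    by apply: nsp; rewrite ep -e3.
  - move=> hv; rewrite -(cong_phi hsig hc) in hv; by rewrite IH.
  - move=> hu; rewrite IH1 // IH2 //; by rewrite -(cong_phi hsig huv).
  - move=> huc.
    have hvc : phi n (vadd v c) = b by rewrite phi_add -(cong_phi hsig huv) -phi_add.
    case: (ltnP 0 (phi n c)) => [cp|]; last first.
      rewrite leqn0 => /eqP/phi0 ec; subst c; rewrite !vadd0; apply: IH.
      by rewrite -huc vadd0.
    have [i ci] := phi_pos cp.
    have hc : connect (nabla_edge n b) (cv b (vadd u c)) (cv b (vadd v c)).
      apply: (adj (i := i)); rewrite ?cv_in //.
        by rewrite (coordE i (nvK huc)); apply: leq_trans ci (leq_addl _ _).
      by rewrite (coordE i (nvK hvc)); apply: leq_trans ci (leq_addl _ _).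
    by rewrite /J (same_connect (Econ b) hc).
have p0 : phi n (nv r0) = b by have [_] := rts_root r0in; rewrite inZf => /eqP.
have pq : phi n (nv rq) = b by have [_] := rts_root rqin; rewrite inZf => /eqP.
have := inv _ _ (proj2 (hpres (nv r0) (nv rq)) (etrans p0 (esym pq))) p0.
by rewrite /J !cvK connect0 (negbTE nc0q).
Qed.

Lemma ci_main : complete_intersection n.
Proof.
have [bs [ubs hbs]] := betti_list.
exists (rhoL bs); split.
- exact: uniq_rhoL.
- split; first exact: pres hbs.
  move=> sig h1 h2; exact: minimal h1 h2.
- apply/eqP; rewrite subn1 /= eqn_leq size_rhoL sum_nc //=.
  rewrite -size_rhoL; apply: (rank_bound (npos ord0)) => a b hab.
  exact: gen_all hbs a b hab.
Qed.

End Basic.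

Lemma mg_ex (S : nat -> Prop) s : S s -> 0 < s -> exists x, minimal_generator S x.
Proof.
elim: s {-2}s (leqnn s) => [|m IH] s hs Ss s0; first by move: hs s0; rewrite leqn0 => /eqP->.
case: (classic (exists u v, [/\ S u, S v, 0 < u, 0 < v & s = u + v])) => [[u [v [Su Sv u0 v0 es]]]|H].
  apply: (IH u) => //; subst s; rewrite -ltnS; apply: leq_trans hs.
  by rewrite -{1}[u]addn0 ltn_add2l.
by exists s; split.
Qed.

Theorem corollary6p3 (S : nat -> Prop) (e : nat) (n : 'I_e -> nat) :
  numerical_semigroup S ->
  minimal_generating_system S n ->
  betti_sorted S n ->
  complete_intersection n.
Proof.
move=> [S0 Sadd [N HN]] [ninj Hmg] Hs.
case: e n ninj Hmg Hs => [|e'] n ninj Hmg Hs.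
  have [x hx] := mg_ex (HN N.+1 (leqnSn N)) (ltn0Sn N).
  by have [[]] := (Hmg x).1 hx.
apply: (ci_main S0 Sadd) => // [i|x hx]; first by apply/(Hmg (n i)).2; exists i.
exact: (Hmg x).1.
Qed.
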